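(* Let $K$ be a field and $\mathbb M$ a $\mathcal K$-module such that $\mathbb M^*$ is well defined. Then $\mathbb M$ is separated if and only if the natural morphism $\mathbb M\to\mathbb M_{sch}$ is a monomorphism. Consequently, $\mathbb M$ is separated if and only if it is isomorphic to a $\mathcal K$-submodule of a $\mathcal K$-module of the form $\mathcal V^*$ for some $K$-vector space $V$.
   Context: For a commutative ring $R$ (here $R=K$), an $\mathcal R$-module is a covariant functor $\mathbb M$ from commutative $R$-algebras to abelian groups with each $\mathbb M(S)$ an $S$-module, functorially; morphisms are natural transformations $S$-linear on each $S$. For an $R$-module $V$, $\mathcal V(S)=V\otimes_RS$, and $\mathbb M^*(S)=\operatorname{Hom}_{\mathcal S}(\mathbb M_{|S},\mathcal S)$ where $\mathbb M_{|S}$ is restriction to $S$-algebras. $\mathbb M_{sch}$ is the $\mathcal R$-module $\mathbb M_{sch}(S)=\operatorname{Hom}_R(\mathbb M^*(R),S)$, and the natural morphism $\mathbb M\to\mathbb M_{sch}$ sends $m\in\mathbb M(S)$ to $w\mapsto w_S(m)$. $\mathbb M$ is (linearly) separated if the natural morphism $\mathbb M\to\mathbb M^{**}$, $m\mapsto(w\mapsto w(m))$, is a monomorphism, i.e. for each $R$-algebra $S$ and $0\ne m\in\mathbb M(S)$ there are a commutative $S$-algebra $T$ and $w\in\mathbb M^*(T)$ with $w(m)\neq0$. *)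

(* Defs.v *)
From HB Require Import structures.
From mathcomp Require Import all_boot all_order all_algebra.
Set Implicit Arguments. Unset Strict Implicit. Unset Printing Implicit Defensive.
Import GRing.Theory.
Local Open Scope ring_scope.

(* Commutative K-algebras are objects of [comAlgType K]; K-algebra morphisms
   are [{lrmorphism S -> T}].  An S-algebra is a K-algebra T together with a
   K-algebra morphism S -> T. *)

Record kmod (K : fieldType) := KMod {
  kobj : forall S : comAlgType K, lmodType S;
  kmap : forall (S T : comAlgType K), {lrmorphism S -> T} -> kobj S -> kobj T;
  kmapD : forall (S T : comAlgType K) (f : {lrmorphism S -> T}) (x y : kobj S),
      kmap f (x + y) = kmap f x + kmap f y;
  kmapZ : forall (S T : comAlgType K) (f : {lrmorphism S -> T}) (s : S) (x : kobj S),
      kmap f (s *: x) = f s *: kmap f x;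
  kmap_id : forall (S : comAlgType K) (f : {lrmorphism S -> S}),
      (forall s, f s = s) -> forall x, kmap f x = x;
  kmap_comp : forall (S T U : comAlgType K) (f : {lrmorphism S -> T})
      (g : {lrmorphism T -> U}) (h : {lrmorphism S -> U}),
      (forall s, h s = g (f s)) -> forall x, kmap h x = kmap g (kmap f x)
}.

Section Dual.
Variables (K : fieldType) (M : kmod K).

(* An element of M^*(S) = Hom_S(M_{|S}, S): a natural family, indexed by the
   S-algebras (T, phi : S -> T), of T-linear maps M(T) -> T. *)
Record dual_pt (S : comAlgType K) := DualPt {
  dev : forall (T : comAlgType K), {lrmorphism S -> T} -> kobj M T -> T;
  devD : forall (T : comAlgType K) (phi : {lrmorphism S -> T}) (x y : kobj M T),
      dev phi (x + y) = dev phi x + dev phi y;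
  devZ : forall (T : comAlgType K) (phi : {lrmorphism S -> T}) (t : T) (x : kobj M T),
      dev phi (t *: x) = t * dev phi x;
  dev_nat : forall (T T' : comAlgType K) (phi : {lrmorphism S -> T})
      (phi' : {lrmorphism S -> T'}) (g : {lrmorphism T -> T'}),
      (forall s, g (phi s) = phi' s) ->
      forall x, dev phi' (kmap g x) = g (dev phi x)
}.

(* "M^* is well defined": every M^*(S) is a set (small), i.e. injects into a
   small type (here: the carrier of some K-vector space). *)
Definition dual_well_defined : Prop :=
  forall S : comAlgType K,
    exists (X : lmodType K) (f : dual_pt S -> X), injective f.

(* Separated: for each S and 0 <> m in M(S) there are an S-algebra
   (T, phi) and w in M^*(T) with w(m) <> 0, where w(m) = w_T(M(phi) m)
   (w evaluated at T, viewed as a T-algebra via the identity). *)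
Definition separated : Prop :=
  forall (S : comAlgType K) (m : kobj M S), m != 0 ->
    exists (T : comAlgType K) (phi : {lrmorphism S -> T}) (w : dual_pt T),
      dev w (idfun : {lrmorphism T -> T}) (kmap phi m) != 0.

Definition Kalg : comAlgType K := K^o.

Fact in_alg_Kalg_scalable (S : comAlgType K) :
  scalable (in_alg S : Kalg -> S).
Proof. by move=> a k; rewrite /GRing.in_alg /= scalerA. Qed.
HB.instance Definition _ (S : comAlgType K) :=
  GRing.isScalable.Build K Kalg S *:%R (in_alg S : Kalg -> S)
    (in_alg_Kalg_scalable S).

(* The natural morphism M -> M_sch at S:
   m |-> (w in M^*(K) |-> w_S(m)), where S is a K-algebra via the structure
   morphism K -> S (in_alg). *)
Definition to_sch (S : comAlgType K) (m : kobj M S) : dual_pt Kalg -> S :=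
  fun w => dev w (in_alg S : {lrmorphism Kalg -> S}) m.

Definition to_sch_mono : Prop :=
  forall S : comAlgType K, injective (@to_sch S).

(* For a K-vector space V, the dual module V^*, V^*(S) = Hom_S(V (x)_K S, S),
   is identified with the standard S-module Hom_K(V, S) (K-linear maps),
   with S-structure (s.phi)(v) = s * phi(v) and functoriality
   V^*(f)(phi) = f o phi.  [M is isomorphic to a K-submodule of V^*] is
   expressed as: there is a monomorphism (componentwise injective morphism of
   K-modules) M -> V^*. *)
Definition embeds_in_vdual (V : lmodType K) : Prop :=
  exists h : forall S : comAlgType K, kobj M S -> V -> S,
    [/\ (* each h_S(m) is K-linear, i.e. lies in V^*(S) *)
        (forall (S : comAlgType K) (m : kobj M S) (a : K) (v w : V),
           h S m (a *: v + w) = a *: h S m v + h S m w),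
        (forall (S : comAlgType K) (s : S) (m m' : kobj M S) (v : V),
           h S (s *: m + m') v = s * h S m v + h S m' v),
        (forall (S T : comAlgType K) (f : {lrmorphism S -> T}) (m : kobj M S) (v : V),
           h T (kmap f m) v = f (h S m v))
      &
        (forall S : comAlgType K, injective (h S))].

End Dual.

(* Main.v *)
Require Import Defs.
From HB Require Import structures.
From mathcomp Require Import all_boot all_order all_algebra.
From mathcomp Require Import boolp classical_sets.
Set Implicit Arguments. Unset Strict Implicit. Unset Printing Implicit Defensive.
Import GRing.Theory.
Local Open Scope ring_scope.

Section LinFun.
Variable K : fieldType.

Record lfun (T : lmodType K) := LFun {
  lf :> T -> K;
  lf_lin : forall a x y, lf (a *: x + y) = a * lf x + lf y }.

Section Basic.
Variable T : lmodType K.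
Implicit Types (l : lfun T).

Lemma lf0 l : l 0 = 0.
Proof. have H := lf_lin l 1 0 0; rewrite scaler0 addr0 mul1r in H.
by apply: (addIr (l 0)); rewrite add0r -H. Qed.

Lemma lfD l x y : l (x + y) = l x + l y.
Proof. by rewrite -[x in LHS]scale1r lf_lin mul1r. Qed.

Lemma lfZ l a x : l (a *: x) = a * l x.
Proof. by rewrite -[a *: x]addr0 lf_lin lf0 addr0. Qed.

Lemma lfN l x : l (- x) = - l x.
Proof. by rewrite -scaleN1r lfZ mulN1r. Qed.

Lemma lfB l x y : l (x - y) = l x - l y.
Proof. by rewrite lfD lfN. Qed.

Definition subsp (U : T -> Prop) := forall a x y, U x -> U y -> U (a *: x + y).

Local Open Scope classical_set_scope.
Lemma functional_ext (W : T -> Prop) v :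
  W 0 -> subsp W -> ~ W v ->
  exists l : lfun T, (forall x, W x -> l x = 0) /\ l v = 1.
Proof.
move=> W0 Wc nWv.
pose P := fun A : set T => subsp (A `|` W) /\ ~ (A `|` W) v.
have [A [[Asub Anv] Amax]] : exists A, P A /\ forall B, A `<` B -> ~ P B.
  apply: Zorn_bigcup => F FP Ftot; split.
  - move=> a x y [[X FX Xx]|Wx] [[Y FY Yy]|Wy].
    + have [XY|YX] := Ftot _ _ FX FY.
      * have := (FP _ FY).1 a x y (or_introl (XY _ Xx)) (or_introl Yy).
        by case=> [h|h]; [left; exists Y|right].
      * have := (FP _ FX).1 a x y (or_introl Xx) (or_introl (YX _ Yy)).
        by case=> [h|h]; [left; exists X|right].
    + have := (FP _ FX).1 a x y (or_introl Xx) (or_intror Wy).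
      by case=> [h|h]; [left; exists X|right].
    + have := (FP _ FY).1 a x y (or_intror Wx) (or_introl Yy).
      by case=> [h|h]; [left; exists Y|right].
    + by right; apply: Wc.
  - case=> [[X FX Xv]|//].
    by apply: (FP _ FX).2; left.
pose U := A `|` W.
have U0 : U 0 by right.
have UN : forall x, U x -> U (- x).
  by move=> x Ux; rewrite -[- x]addr0 -scaleN1r; apply: Asub.
have UD : forall x y, U x -> U y -> U (x + y).
  by move=> x y Ux Uy; rewrite -[x]scale1r; apply: Asub.
have UZ : forall a x, U x -> U (a *: x).
  by move=> a x Ux; rewrite -[a *: x]addr0; apply: Asub.
have claim : forall x, U x \/ exists u c, U u /\ v = u + c *: x.
  move=> x; case: (pselect (U x)) => [|nUx]; first by left.
  right; pose B := fun y => exists u c, U u /\ y = u + c *: x.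
  have AB : A `<=` B by move=> y Ay; exists y, 0; split; [left|rewrite scale0r addr0].
  have : ~ P B.
    apply: Amax; split => // BA; apply: nUx; left; apply: BA.
    by exists 0, 1; split => //; rewrite add0r scale1r.
  move=> nPB; apply: contra_notP nPB => nB; split.
  - move=> a y1 y2 H1 H2.
    have cv : forall y, (B `|` W) y -> B y.
      by move=> y [//|Wy]; exists y, 0; split; [right|rewrite scale0r addr0].
    case: (cv _ H1) => u1 [c1 [U1 ->]]; case: (cv _ H2) => u2 [c2 [U2 ->]].
    left; exists (a *: u1 + u2), (a * c1 + c2); split; first exact: Asub.
    by rewrite scalerDr scalerDl scalerA addrACA.
  - by case=> [Bv|//]; apply: nB.
have ex_c : forall x, exists c, U (x - c *: v).
  move=> x; case: (claim x) => [Ux|[u [c [Uu vE]]]].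
    by exists 0; rewrite scale0r subr0.
  have c0 : c != 0.
    apply/negP => /eqP c0; move: vE; rewrite c0 scale0r addr0 => vE.
    by apply: Anv; rewrite vE.
  exists c^-1; rewrite vE scalerDr scalerA mulVf // scale1r (addrC (c^-1 *: u) x) opprD addrA subrr add0r.
  exact/UN/UZ.
have uniq_c : forall x c c', U (x - c *: v) -> U (x - c' *: v) -> c = c'.
  move=> x c c' H1 H2; apply/eqP; apply: contraT => ncc.
  have : U ((c' - c) *: v).
    have -> : (c' - c) *: v = (x - c *: v) - (x - c' *: v).
      by rewrite scalerBl opprB [RHS]addrC [RHS]addrA subrK.
    by apply: UD => //; apply: UN.
  move=> /(UZ (c' - c)^-1); rewrite scalerA mulVf ?scale1r ?subr_eq0 1?eq_sym //.
pose l x := projT1 (cid (ex_c x)).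
have lP : forall x, U (x - l x *: v) := fun x => projT2 (cid (ex_c x)).
have llin : forall a x y, l (a *: x + y) = a * l x + l y.
  move=> a x y; apply: (uniq_c (a *: x + y)); first exact: lP.
  have -> : a *: x + y - (a * l x + l y) *: v = a *: (x - l x *: v) + (y - l y *: v).
    by rewrite scalerDl -scalerA scalerBr opprD addrACA.
  by apply: Asub; apply: lP.
exists (LFun llin); split => /=.
  move=> x Wx; apply: (uniq_c x); first exact: lP.
  by rewrite scale0r subr0; right.
by apply: (uniq_c v); [exact: lP | rewrite scale1r subrr].
Qed.

End Basic.
End LinFun.

Section Bil.
Variable K : fieldType.
Variables (T S Y : lmodType K).

Fixpoint Sp (ts : seq T) (x : T) : Prop :=
  match ts with [::] => x = 0 | t :: ts' => exists c, Sp ts' (x - c *: t) end.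

Lemma Sp0 ts : Sp ts 0.
Proof. by elim: ts => [|t ts IH] //=; exists 0; rewrite scale0r subr0. Qed.

Lemma Sp_sub ts : subsp (Sp ts).
Proof.
elim: ts => [|t ts IH] a x y /=; first by move=> -> ->; rewrite scaler0 addr0.
move=> [c1 H1] [c2 H2]; exists (a * c1 + c2).
have -> : a *: x + y - (a * c1 + c2) *: t = a *: (x - c1 *: t) + (y - c2 *: t).
  by rewrite scalerDl -scalerA scalerBr opprD addrACA.
exact: IH.
Qed.

Lemma Sp_mem ts t : t \in ts -> Sp ts t.
Proof.
elim: ts => [|u ts IH] //=; rewrite inE => /orP[/eqP ->|/IH H].
  by exists 1; rewrite scale1r subrr; apply: Sp0.
by exists 0; rewrite scale0r subr0.
Qed.

Variable B : T -> S -> Y.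
Hypothesis BL : forall a t t' s, B (a *: t + t') s = a *: B t s + B t' s.
Hypothesis BR : forall a t s s', B t (a *: s + s') = a *: B t s + B t s'.

Lemma zmod_aux (V : zmodType) (a b d e : V) : a + b + (d - b + e) = d + (a + e).
Proof. by rewrite [d - b + e]addrAC addrACA subrr addr0 addrCA. Qed.

Lemma B0l s : B 0 s = 0.
Proof. have := BL 1 0 0 s; rewrite scaler0 addr0 scale1r => H.
by apply: (addIr (B 0 s)); rewrite add0r -H. Qed.

Lemma B0r t : B t 0 = 0.
Proof. have := BR 1 t 0 0; rewrite scaler0 addr0 scale1r => H.
by apply: (addIr (B t 0)); rewrite add0r -H. Qed.

Lemma BlD t t' s : B (t + t') s = B t s + B t' s.
Proof. by have := BL 1 t t' s; rewrite !scale1r. Qed.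
Lemma BlZ a t s : B (a *: t) s = a *: B t s.
Proof. by rewrite -[a *: t]addr0 BL B0l addr0. Qed.
Lemma BrD t s s' : B t (s + s') = B t s + B t s'.
Proof. by have := BR 1 t s s'; rewrite !scale1r. Qed.
Lemma BrZ a t s : B t (a *: s) = a *: B t s.
Proof. by rewrite -[a *: s]addr0 BR B0r addr0. Qed.
Lemma BlN t s : B (- t) s = - B t s.
Proof. by rewrite -scaleN1r BlZ scaleN1r. Qed.

Definition lsum (l : lfun T) (z : seq (T * S)) := \sum_(p <- z) l p.1 *: p.2.
Definition bsum (z : seq (T * S)) := \sum_(p <- z) B p.1 p.2.

Lemma shift_sp rest t s : Sp (map fst rest) t ->
  exists rest', [/\ size rest' = size rest,
    (forall l, lsum l rest' = l t *: s + lsum l rest) &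
    bsum rest' = B t s + bsum rest].
Proof.
elim: rest t => [|[t1 s1] r IH] t /=.
  move=> ->; exists [::]; split => //.
    by move=> l; rewrite /lsum !big_nil lf0 scale0r addr0.
  by rewrite /bsum !big_nil B0l addr0.
move=> [c Hc]; have [r' [sz Hl Hb]] := IH _ Hc.
exists ((t1, s1 + c *: s) :: r'); split => /=; first by rewrite sz.
  move=> l; rewrite /lsum !big_cons /= -/(lsum l r') Hl -/(lsum l r) lfB lfZ.
  by rewrite scalerDr scalerA scalerBl [l t1 * c]mulrC zmod_aux.
rewrite /bsum !big_cons /= -/(bsum r') Hb -/(bsum r) BrD BrZ.
by rewrite BlD BlN BlZ zmod_aux.
Qed.

Lemma bilin_vanish z : (forall l, lsum l z = 0) -> bsum z = 0.
Proof.
move: {2}(size z) (erefl (size z)) => n; elim: n z => [|n IH] [|[t s] r] //=.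
1: by move=> _ _; rewrite /bsum big_nil.

move=> [] sz Hz.
have lz : forall l, lsum l ((t, s) :: r) = l t *: s + lsum l r.
  by move=> l; rewrite /lsum big_cons.
have bz : bsum ((t, s) :: r) = B t s + bsum r by rewrite /bsum big_cons.
case: (pselect (Sp (map fst r) t)) => [Hsp|nsp].
  have [r' [sz' Hl Hb]] := shift_sp s Hsp.
  rewrite bz -Hb; apply: IH; first by rewrite sz'.
  by move=> l; rewrite Hl -lz.
have [l [Hl lt]] := functional_ext (Sp0 (map fst r)) (@Sp_sub _) nsp.
have lr : forall l' : lfun T, (forall x, Sp (map fst r) x -> l' x = 0) -> lsum l' r = 0.
  move=> l' Hl'; rewrite /lsum big_seq big1 // => p pr.
  by rewrite (Hl' _ (Sp_mem (map_f fst pr))) scale0r.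
have s0 : s = 0.
  by have := Hz l; rewrite lz lt scale1r lr // addr0.
rewrite bz s0 B0r add0r; apply: IH => // l'.
by have := Hz l'; rewrite lz s0 scaler0 add0r.
Qed.

End Bil.

Section Tens.
Variable K : fieldType.
Variables (T R : comAlgType K).

Implicit Types l : lfun T.
Definition ls l (z : seq (T * R)) : R := \sum_(p <- z) l p.1 *: p.2.
Definition eval (z : seq (T * R)) : lfun T -> R := fun l => ls l z.

Definition Tn := {f : lfun T -> R | exists z, f = eval z}.
HB.instance Definition _ := gen_eqMixin Tn.
HB.instance Definition _ := gen_choiceMixin Tn.

Definition rep (p : Tn) : seq (T * R) := projT1 (cid (proj2_sig p)).
Lemma repP p : proj1_sig p = eval (rep p).
Proof. exact: (projT2 (cid (proj2_sig p))). Qed.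
Definition mkT (z : seq (T * R)) : Tn := exist _ (eval z) (ex_intro _ z erefl).

Definition V (p : Tn) l := proj1_sig p l.

Lemma Tn_eq p q : (forall l, V p l = V q l) -> p = q.
Proof.
move: p q => [f Hf] [g Hg] /= H.
have fg : f = g by apply: funext => l; apply: H.
subst g; congr exist; exact: Prop_irrelevance.
Qed.

Lemma V_rep p l : V p l = ls l (rep p).
Proof. by rewrite /V repP. Qed.

Lemma V_mkT z l : V (mkT z) l = ls l z.
Proof. by []. Qed.

Lemma ls_cat l z1 z2 : ls l (z1 ++ z2) = ls l z1 + ls l z2.
Proof. by rewrite /ls big_cat. Qed.

Lemma ls1 l t r : ls l [:: (t, r)] = l t *: r.
Proof. by rewrite /ls big_seq1. Qed.

Definition negz (z : seq (T * R)) := map (fun x => (x.1, - x.2)) z.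
Lemma ls_neg l z : ls l (negz z) = - ls l z.
Proof. by rewrite /ls big_map -sumrN; apply: eq_bigr => x _; rewrite scalerN. Qed.

Definition sclz (k : K) (z : seq (T * R)) := map (fun x => (k *: x.1, x.2)) z.
Lemma ls_scl l k z : ls l (sclz k z) = k *: ls l z.
Proof. by rewrite /ls big_map scaler_sumr; apply: eq_bigr => x _; rewrite lfZ scalerA. Qed.

Definition mulz (z1 z2 : seq (T * R)) :=
  [seq (x.1 * y.1, x.2 * y.2) | x <- z1, y <- z2].

Definition tadd p q := mkT (rep p ++ rep q).
Definition topp p := mkT (negz (rep p)).
Definition tzero := mkT [::].
Definition tone := mkT [:: (1, 1)].
Definition tmul p q := mkT (mulz (rep p) (rep q)).
Definition tscale k p := mkT (sclz k (rep p)).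

Lemma V_add p q l : V (tadd p q) l = V p l + V q l.
Proof. by rewrite V_mkT ls_cat -!V_rep. Qed.
Lemma V_opp p l : V (topp p) l = - V p l.
Proof. by rewrite V_mkT ls_neg -V_rep. Qed.
Lemma V_zero l : V tzero l = 0.
Proof. by rewrite V_mkT /ls big_nil. Qed.
Lemma V_scale k p l : V (tscale k p) l = k *: V p l.
Proof. by rewrite V_mkT ls_scl -V_rep. Qed.
Lemma V_one l : V tone l = l 1 *: 1.
Proof. by rewrite V_mkT ls1. Qed.

Lemma tP1 : associative tadd.
Proof. by move=> p q r; apply: Tn_eq => l; rewrite !V_add addrA. Qed.
Lemma tP2 : commutative tadd.
Proof. by move=> p q; apply: Tn_eq => l; rewrite !V_add addrC. Qed.
Lemma tP3 : left_id tzero tadd.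
Proof. by move=> p; apply: Tn_eq => l; rewrite !V_add V_zero add0r. Qed.
Lemma tP4 : left_inverse tzero topp tadd.
Proof. by move=> p; apply: Tn_eq => l; rewrite !V_add V_opp V_zero addNr. Qed.

HB.instance Definition _ := GRing.isZmodule.Build Tn tP1 tP2 tP3 tP4.


Lemma lshR_lin l (t : T) a x y : l ((a *: x + y) * t) = a * l (x * t) + l (y * t).
Proof. by rewrite mulrDl -scalerAl lf_lin. Qed.
Definition lshR l t : lfun T := LFun (lshR_lin l t).
Lemma lshL_lin l (t : T) a x y : l (t * (a *: x + y)) = a * l (t * x) + l (t * y).
Proof. by rewrite mulrDr -scalerAr lf_lin. Qed.
Definition lshL l t : lfun T := LFun (lshL_lin l t).

Definition D (z1 z2 : seq (T * R)) l :=
  \sum_(x <- z1) \sum_(y <- z2) l (x.1 * y.1) *: (x.2 * y.2).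

Lemma D_r z1 z2 l : D z1 z2 l = \sum_(x <- z1) x.2 * ls (lshL l x.1) z2.
Proof.
apply: eq_bigr => x _; rewrite /ls mulr_sumr; apply: eq_bigr => y _.
by rewrite scalerAr.
Qed.

Lemma D_l z1 z2 l : D z1 z2 l = \sum_(y <- z2) ls (lshR l y.1) z1 * y.2.
Proof.
rewrite /D exchange_big; apply: eq_bigr => y _; rewrite /ls mulr_suml.
by apply: eq_bigr => x _; rewrite scalerAl.
Qed.

Lemma D_eqr z1 z2 z2' l : eval z2 = eval z2' -> D z1 z2 l = D z1 z2' l.
Proof.
move=> E; rewrite !D_r; apply: eq_bigr => x _.
by have := congr1 (fun f => f (lshL l x.1)) E; rewrite /eval => ->.
Qed.

Lemma D_eql z1 z1' z2 l : eval z1 = eval z1' -> D z1 z2 l = D z1' z2 l.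
Proof.
move=> E; rewrite !D_l; apply: eq_bigr => y _.
by have := congr1 (fun f => f (lshR l y.1)) E; rewrite /eval => ->.
Qed.

Lemma ls_mulz z1 z2 l : ls l (mulz z1 z2) = D z1 z2 l.
Proof. by rewrite /ls /mulz big_allpairs_dep. Qed.

Lemma V_mul p q zp zq l : proj1_sig p = eval zp -> proj1_sig q = eval zq ->
  V (tmul p q) l = D zp zq l.
Proof.
move=> Ep Eq; have E1 : eval (rep p) = eval zp by rewrite -repP.
have E2 : eval (rep q) = eval zq by rewrite -repP.
by rewrite V_mkT ls_mulz (D_eql _ _ E1) (D_eqr _ _ E2).
Qed.

Lemma V_mulr p q l : V (tmul p q) l = D (rep p) (rep q) l.
Proof. exact: V_mul (repP p) (repP q). Qed.

Lemma tM1 : associative tmul.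
Proof.
move=> p q r; apply: Tn_eq => l.
rewrite (V_mul _ (repP p) (erefl : proj1_sig (tmul q r) = eval (mulz (rep q) (rep r)))).
rewrite (V_mul _ (erefl : proj1_sig (tmul p q) = eval (mulz (rep p) (rep q))) (repP r)).
rewrite /D /mulz big_allpairs_dep; apply: eq_bigr => x _.
rewrite big_allpairs_dep; apply: eq_bigr => y _.
by apply: eq_bigr => w _ /=; rewrite !mulrA.
Qed.

Lemma tM2 : commutative tmul.
Proof.
move=> p q; apply: Tn_eq => l; rewrite !V_mulr /D exchange_big.
by apply: eq_bigr => x _; apply: eq_bigr => y _; rewrite mulrC [y.2 * _]mulrC.
Qed.

Lemma tM3 : left_id tone tmul.
Proof.
move=> p; apply: Tn_eq => l.
rewrite (V_mul _ (erefl : proj1_sig tone = eval [:: (1, 1)]) (repP p)).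
by rewrite V_rep /D big_seq1; apply: eq_bigr => y _ /=; rewrite !mul1r.
Qed.

Lemma tM4 : left_distributive tmul tadd.
Proof.
move=> p q r; apply: Tn_eq => l.
rewrite (V_mul _ (erefl : proj1_sig (tadd p q) = eval (rep p ++ rep q)) (repP r)).
by rewrite V_add !V_mulr /D big_cat.
Qed.

Lemma tM5 : tone != 0.
Proof.
apply/eqP => E.
have Wsub : subsp (fun x : T => x = 0) by move=> a x y -> ->; rewrite scaler0 addr0.
have n1 : ~ (1 : T) = 0 by apply/eqP; exact: oner_neq0.
have [l [_ l1]] := functional_ext (erefl (0 : T)) Wsub n1.
have := congr1 (fun p => V p l) E; rewrite /= /eval ls1 l1 scale1r /ls big_nil.
by move/eqP; rewrite oner_eq0.
Qed.

HB.instance Definition _ := GRing.Zmodule_isComNzRing.Build Tn tM1 tM2 tM3 tM4 tM5.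


Lemma tS1 a b p : tscale a (tscale b p) = tscale (a * b) p.
Proof. by apply: Tn_eq => l; rewrite !V_scale scalerA. Qed.
Lemma tS2 : left_id 1 tscale.
Proof. by move=> p; apply: Tn_eq => l; rewrite V_scale scale1r. Qed.
Lemma tS3 : right_distributive tscale +%R.
Proof. by move=> a p q; apply: Tn_eq => l; rewrite V_scale !V_add !V_scale scalerDr. Qed.
Lemma tS4 p : {morph tscale^~ p : a b / a + b}.
Proof. by move=> a b; apply: Tn_eq => l; rewrite V_add !V_scale scalerDl. Qed.

HB.instance Definition _ := GRing.Zmodule_isLmodule.Build K Tn tS1 tS2 tS3 tS4.

Lemma tSA a (p q : Tn) : a *: (p * q) = (a *: p) * q.
Proof.
apply: Tn_eq => l.
rewrite (V_mul _ (erefl : proj1_sig (tscale a p) = eval (sclz a (rep p))) (repP q)).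
rewrite V_scale V_mulr /D /sclz big_map scaler_sumr; apply: eq_bigr => x _.
rewrite scaler_sumr; apply: eq_bigr => y _ /=.
by rewrite -scalerAl lfZ scalerA.
Qed.

HB.instance Definition _ := GRing.Lmodule_isLalgebra.Build K Tn tSA.
HB.instance Definition _ := GRing.Lalgebra_isComAlgebra.Build K Tn.

Definition TnA : comAlgType K := Tn.


Lemma V_1 l : V (1 : Tn) l = l 1 *: 1.
Proof. exact: V_one. Qed.
Lemma V_0 l : V (0 : Tn) l = 0.
Proof. exact: V_zero. Qed.
Lemma V_D (p q : Tn) l : V (p + q) l = V p l + V q l.
Proof. exact: V_add. Qed.
Lemma V_N (p : Tn) l : V (- p) l = - V p l.
Proof. exact: V_opp. Qed.
Lemma V_B (p q : Tn) l : V (p - q) l = V p l - V q l.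
Proof. by rewrite V_D V_N. Qed.
Lemma V_Z k (p : Tn) l : V (k *: p) l = k *: V p l.
Proof. exact: V_scale. Qed.
Lemma V_M (p q : Tn) zp zq l : proj1_sig p = eval zp -> proj1_sig q = eval zq ->
  V (p * q) l = D zp zq l.
Proof. exact: V_mul. Qed.

Definition iT (t : T) : TnA := mkT [:: (t, 1)].
Definition iR (r : R) : TnA := mkT [:: (1, r)].
Lemma V_iT t l : V (iT t) l = l t *: 1.
Proof. exact: ls1. Qed.
Lemma V_iR r l : V (iR r) l = l 1 *: r.
Proof. exact: ls1. Qed.

Lemma iT_zmod : zmod_morphism iT.
Proof. by move=> x y; apply: Tn_eq => l; rewrite V_B !V_iT lfB scalerBl. Qed.
Lemma iT_mult : multiplicative iT.
Proof.
split=> [x y|//]; apply: Tn_eq => l.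
rewrite (V_M _ (erefl : proj1_sig (iT x) = eval [:: (x, 1)])
               (erefl : proj1_sig (iT y) = eval [:: (y, 1)])).
by rewrite V_iT /D !big_seq1 /= mulr1.
Qed.
Lemma iT_scal : scalable iT.
Proof. by move=> k x; apply: Tn_eq => l; rewrite V_Z !V_iT lfZ scalerA. Qed.
HB.instance Definition _ := GRing.isZmodMorphism.Build T TnA iT iT_zmod.
HB.instance Definition _ := GRing.isMultiplicative.Build T TnA iT iT_mult.
HB.instance Definition _ := GRing.isScalable.Build K T TnA *:%R iT iT_scal.

Lemma iR_zmod : zmod_morphism iR.
Proof. by move=> x y; apply: Tn_eq => l; rewrite V_B !V_iR scalerBr. Qed.
Lemma iR_mult : multiplicative iR.
Proof.
split=> [x y|//]; apply: Tn_eq => l.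
rewrite (V_M _ (erefl : proj1_sig (iR x) = eval [:: (1, x)])
               (erefl : proj1_sig (iR y) = eval [:: (1, y)])).
by rewrite V_iR /D !big_seq1 /= mulr1.
Qed.
Lemma iR_scal : scalable iR.
Proof. by move=> k x; apply: Tn_eq => l; rewrite V_Z !V_iR !scalerA mulrC. Qed.
HB.instance Definition _ := GRing.isZmodMorphism.Build R TnA iR iR_zmod.
HB.instance Definition _ := GRing.isMultiplicative.Build R TnA iR iR_mult.
HB.instance Definition _ := GRing.isScalable.Build K R TnA *:%R iR iR_scal.

Lemma V_iRM r (p : TnA) l : V (iR r * p) l = r * V p l.
Proof.
rewrite (V_M _ (erefl : proj1_sig (iR r) = eval [:: (1, r)]) (repP p)).
rewrite /D big_seq1 V_rep /ls mulr_sumr; apply: eq_bigr => y _ /=.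
by rewrite mul1r scalerAr.
Qed.

Lemma V_ext (p : TnA) (l l' : lfun T) : (forall x, l x = l' x) -> V p l = V p l'.
Proof. by move=> H; rewrite !V_rep /ls; apply: eq_bigr => x _; rewrite H. Qed.

End Tens.

Section TensMap.
Variable K : fieldType.
Variables (T R R' : comAlgType K) (g : {lrmorphism R -> R'}).

Lemma gZ k (x : R) : g (k *: x) = k *: g x.
Proof. exact: (linearZ_LR g). Qed.

Lemma G_ex (p : TnA T R) : exists z, (fun l => g (V p l)) = eval z.
Proof.
exists (map (fun x => (x.1, g x.2)) (rep p)); apply: funext => l.
rewrite V_rep /eval /ls big_map rmorph_sum; apply: eq_bigr => x _. exact: (linearZ_LR g).
Qed.

Definition Gm (p : TnA T R) : TnA T R' := exist _ _ (G_ex p).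
Lemma V_G p l : V (Gm p) l = g (V p l).
Proof. by []. Qed.

Lemma G_zmod : zmod_morphism Gm.
Proof. by move=> x y; apply: Tn_eq => l; rewrite V_B !V_G V_B rmorphB. Qed.
Lemma G_mult : multiplicative Gm.
Proof.
split=> [x y|].
  apply: Tn_eq => l; rewrite V_G V_mulr.
  have Ex : proj1_sig (Gm x) = eval (map (fun u => (u.1, g u.2)) (rep x)).
    apply: funext => l'; rewrite /= V_rep /eval /ls big_map rmorph_sum.
    by apply: eq_bigr => u _; exact: gZ.
  have Ey : proj1_sig (Gm y) = eval (map (fun u => (u.1, g u.2)) (rep y)).
    apply: funext => l'; rewrite /= V_rep /eval /ls big_map rmorph_sum.
    by apply: eq_bigr => u _; exact: gZ.
  rewrite (V_M _ Ex Ey) /D big_map rmorph_sum; apply: eq_bigr => u _.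
  rewrite big_map rmorph_sum; apply: eq_bigr => w _.
  by rewrite /= -(rmorphM g); exact: gZ.
by apply: Tn_eq => l; rewrite V_G !V_1 -(rmorph1 g); exact: gZ.
Qed.
Lemma G_scal : scalable Gm.
Proof. by move=> k x; apply: Tn_eq => l; rewrite V_Z !V_G V_Z; exact: gZ. Qed.
HB.instance Definition _ := GRing.isZmodMorphism.Build (TnA T R) (TnA T R') Gm G_zmod.
HB.instance Definition _ := GRing.isMultiplicative.Build (TnA T R) (TnA T R') Gm G_mult.
HB.instance Definition _ := GRing.isScalable.Build K (TnA T R) (TnA T R') *:%R Gm G_scal.

Lemma G_iT t : Gm (iT R t) = iT R' t.
Proof. by apply: Tn_eq => l; rewrite V_G !V_iT gZ rmorph1. Qed.
Lemma G_iR r : Gm (iR T r) = iR T (g r).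
Proof. by apply: Tn_eq => l; rewrite V_G !V_iR gZ. Qed.

End TensMap.

Section Mu.
Variable K : fieldType.
Variables (T S : comAlgType K) (phi : {lrmorphism S -> T}).

Lemma phiZ k (x : S) : phi (k *: x) = k *: phi x.
Proof. exact: (linearZ_LR phi). Qed.

Lemma phiL k (x y : S) : phi (k *: x + y) = k *: phi x + phi y.
Proof. by rewrite rmorphD; congr (_ + _); exact: phiZ. Qed.

Definition Bm (t : T) (s : S) : T := t * phi s.
Lemma BmL a t t' s : Bm (a *: t + t') s = a *: Bm t s + Bm t' s.
Proof. by rewrite /Bm mulrDl scalerAl. Qed.
Lemma BmR a t s s' : Bm t (a *: s + s') = a *: Bm t s + Bm t s'.
Proof. by rewrite /Bm phiL mulrDr scalerAr. Qed.

Definition mu (p : TnA T S) : T := \sum_(x <- rep p) x.1 * phi x.2.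

Lemma mu_any p z : proj1_sig p = eval z -> mu p = \sum_(x <- z) x.1 * phi x.2.
Proof.
move=> Ez.
have H : bsum Bm (rep p ++ negz z) = 0.
  apply: (bilin_vanish BmL BmR) => l.
  change (ls l (rep p ++ negz z) = 0).
  rewrite ls_cat ls_neg -V_rep /V Ez subrr //.
move: H; rewrite /bsum big_cat /= big_map /mu.
under [X in _ + X]eq_bigr => x _ do rewrite /Bm /= rmorphN mulrN.
by rewrite sumrN => /eqP; rewrite subr_eq0 => /eqP.
Qed.


Lemma sig_eval (p : TnA T S) z : (forall l, V p l = ls l z) -> proj1_sig p = eval z.
Proof. by move=> H; apply: funext => l; apply: H. Qed.

Lemma mu_zmod : zmod_morphism mu.
Proof.
move=> p q.
rewrite (@mu_any (p - q) (rep p ++ negz (rep q))); last first.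
  by apply: sig_eval => l; rewrite V_B !V_rep ls_cat ls_neg.
rewrite big_cat big_map /mu -sumrN; congr (_ + _); apply: eq_bigr => x _ /=.
by rewrite rmorphN mulrN.
Qed.

Lemma mu_mult : multiplicative mu.
Proof.
split=> [p q|].
  rewrite (@mu_any (p * q) (mulz (rep p) (rep q))) //.
  rewrite /mulz big_allpairs_dep /mu mulr_suml; apply: eq_bigr => x _.
  rewrite mulr_sumr; apply: eq_bigr => y _ /=.
  by rewrite rmorphM mulrACA.
by rewrite (@mu_any (1 : TnA T S) [:: (1, 1)]) // big_seq1 /= rmorph1 mulr1.
Qed.

Lemma mu_scal : scalable mu.
Proof.
move=> k p.
rewrite (@mu_any (k *: p) (sclz k (rep p))) //.
by rewrite big_map /mu scaler_sumr; apply: eq_bigr => x _; rewrite -scalerAl.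
Qed.

HB.instance Definition _ := GRing.isZmodMorphism.Build (TnA T S) T mu mu_zmod.
HB.instance Definition _ := GRing.isMultiplicative.Build (TnA T S) T mu mu_mult.
HB.instance Definition _ := GRing.isScalable.Build K (TnA T S) T *:%R mu mu_scal.

Lemma mu_iT t : mu (iT S t) = t.
Proof. by rewrite (@mu_any _ [:: (t, 1)]) // big_seq1 /= rmorph1 mulr1. Qed.
Lemma mu_iR s : mu (iR T s) = phi s.
Proof. by rewrite (@mu_any _ [:: (1, s)]) // big_seq1 /= mul1r. Qed.

End Mu.

Section Main.
Variables (K : fieldType) (M : kmod K).

Lemma dev0 (S T : comAlgType K) (w : dual_pt M S) (phi : {lrmorphism S -> T}) :
  dev w phi 0 = 0.
Proof.
have := devD w phi 0 0; rewrite addr0 => H.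
by apply: (addIr (dev w phi 0)); rewrite add0r -H.
Qed.

Lemma devB (S T : comAlgType K) (w : dual_pt M S) (phi : {lrmorphism S -> T}) x y :
  dev w phi (x - y) = dev w phi x - dev w phi y.
Proof.
rewrite devD -scaleN1r devZ mulN1r //.
Qed.

Lemma in_alg_comm (T T' : comAlgType K) (g : {lrmorphism T -> T'}) (k : Kalg K) :
  g (in_alg T k) = in_alg T' k.
Proof.
rewrite /GRing.in_alg /=.
have -> : g (k *: 1) = k *: g 1 by exact: (linearZ_LR g).
by rewrite rmorph1.
Qed.

Section Restr.
Variables (S : comAlgType K) (w : dual_pt M (Kalg K)).
Definition rdev (T : comAlgType K) (psi : {lrmorphism S -> T}) (x : kobj M T) : T :=
  dev w (in_alg T : {lrmorphism Kalg K -> T}) x.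
Lemma rdevD T psi x y : @rdev T psi (x + y) = rdev psi x + rdev psi y.
Proof. exact: devD. Qed.
Lemma rdevZ T psi t x : @rdev T psi (t *: x) = t * rdev psi x.
Proof. exact: devZ. Qed.
Lemma rdev_nat (T T' : comAlgType K) (phi : {lrmorphism S -> T})
    (phi' : {lrmorphism S -> T'}) (g : {lrmorphism T -> T'}) :
    (forall s, g (phi s) = phi' s) ->
    forall x, rdev phi' (kmap g x) = g (rdev phi x).
Proof. by move=> _ x; apply: dev_nat => s; apply: in_alg_comm. Qed.
Definition restr : dual_pt M S := DualPt rdevD rdevZ rdev_nat.
End Restr.

Lemma mono_sep : to_sch_mono M -> separated M.
Proof.
move=> mono S m m0.
have : exists w, to_sch m w != 0.
  apply: contra_notP (negP m0) => H; apply/eqP; apply: mono.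
  apply: funext => w; rewrite /to_sch dev0.
  by apply/eqP; apply: contra_notT H => Hw; exists w.
case=> w Hw; exists S, idfun, (restr S w).
by rewrite /= /rdev kmap_id.
Qed.


Section Build.
Variables (T : comAlgType K) (w : dual_pt M T) (l : lfun T).
Definition bdev (R : comAlgType K) (psi : {lrmorphism Kalg K -> R}) (x : kobj M R) : R :=
  V (dev w (iT R : {lrmorphism T -> TnA T R}) (kmap (@iR _ T R : {lrmorphism R -> TnA T R}) x)) l.
Lemma bdevD R psi x y : @bdev R psi (x + y) = bdev psi x + bdev psi y.
Proof. by rewrite /bdev kmapD devD V_D. Qed.
Lemma bdevZ R psi t x : @bdev R psi (t *: x) = t * bdev psi x.
Proof. by rewrite /bdev kmapZ devZ V_iRM. Qed.
Lemma bdev_nat (R R' : comAlgType K) (phi : {lrmorphism Kalg K -> R})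
    (phi' : {lrmorphism Kalg K -> R'}) (g : {lrmorphism R -> R'}) :
    (forall s, g (phi s) = phi' s) ->
    forall x, bdev phi' (kmap g x) = g (bdev phi x).
Proof.
move=> _ x; rewrite /bdev.
have E1 := kmap_comp (f := g) (g := (@iR _ T R' : {lrmorphism R' -> TnA T R'}))
   (h := (Gm g \o (@iR _ T R : {lrmorphism R -> TnA T R}))) (fun s => G_iR T g s) x.
have E2 := kmap_comp (f := (@iR _ T R : {lrmorphism R -> TnA T R})) (g := Gm g)
   (h := (Gm g \o (@iR _ T R : {lrmorphism R -> TnA T R}))) (fun s => erefl) x.
rewrite -E1 E2 (dev_nat (phi := iT R) (phi' := iT R') (g := Gm g) w) ?V_G //.
exact: G_iT.
Qed.
Definition bw : dual_pt M (Kalg K) := DualPt bdevD bdevZ bdev_nat.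
End Build.

Lemma sep_zero : separated M -> forall (S : comAlgType K) (m : kobj M S),
  (forall w, to_sch m w = 0) -> m = 0.
Proof.
move=> sep S m H; apply/eqP; apply: contraT => m0.
have [T [phi [w Hw]]] := sep S m m0.
pose p := dev w (iT S : {lrmorphism T -> TnA T S}) (kmap (@iR _ T S : {lrmorphism S -> TnA T S}) m).
have Ep : mu phi p = dev w idfun (kmap phi m).
  rewrite (kmap_comp (f := (@iR _ T S : {lrmorphism S -> TnA T S})) (g := mu phi) (h := phi)).
    by rewrite (dev_nat (phi := iT S) (phi' := idfun) (g := mu phi) w) // => t; exact: mu_iT.
  by move=> s; rewrite /=; symmetry; exact: mu_iR.
have p0 : p != 0.
  by apply: contra Hw => /eqP p0; rewrite -Ep p0 rmorph0.
have [l Hl] : exists l, V p l != 0.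
  apply: contra_notP (negP p0) => nl; apply/eqP; apply: Tn_eq => l.
  rewrite V_0; apply/eqP; apply: contra_notT nl => Hl; exists l; exact: Hl.
by move: (H (bw w l)); rewrite /to_sch /= /bdev => E; move: Hl; rewrite /p E eqxx.
Qed.

Lemma sep_mono : separated M -> to_sch_mono M.
Proof.
move=> sep S m1 m2 E; apply/eqP; rewrite -subr_eq0; apply/eqP.
apply: (sep_zero sep) => w; rewrite /to_sch devB.
by have := congr1 (fun f => f w) E; rewrite /to_sch => ->; rewrite subrr.
Qed.


Section DualVS.
Variable S : comAlgType K.
Implicit Types w : dual_pt M S.

Lemma dual_ext w1 w2 :
  (forall (T : comAlgType K) (phi : {lrmorphism S -> T}) x, dev w1 phi x = dev w2 phi x) ->
  w1 = w2.
Proof.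
move: w1 w2 => [d1 D1 Z1 N1] [d2 D2 Z2 N2] /= H.
have E : d1 = d2.
  apply: functional_extensionality_dep => T; apply: funext => phi; apply: funext => x.
  exact: H.
subst d2; congr DualPt; exact: Prop_irrelevance.
Qed.

Definition dadd w1 w2 : dual_pt M S.
Proof.
refine (@DualPt K M S (fun T phi x => dev w1 phi x + dev w2 phi x) _ _ _).
- by move=> T phi x y; rewrite !devD addrACA.
- by move=> T phi t x; rewrite !devZ mulrDr.
- by move=> T T' phi phi' g H x; rewrite !(dev_nat _ H) rmorphD.
Defined.

Definition dzero : dual_pt M S.
Proof.
refine (@DualPt K M S (fun T phi x => 0) _ _ _).
- by move=> *; rewrite addr0.
- by move=> *; rewrite mulr0.
- by move=> *; rewrite rmorph0.
Defined.

Definition dopp w : dual_pt M S.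
Proof.
refine (@DualPt K M S (fun T phi x => - dev w phi x) _ _ _).
- by move=> T phi x y; rewrite devD opprD.
- by move=> T phi t x; rewrite devZ mulrN.
- by move=> T T' phi phi' g H x; rewrite (dev_nat _ H) rmorphN.
Defined.

Definition dscale (k : K) w : dual_pt M S.
Proof.
refine (@DualPt K M S (fun T phi x => k *: dev w phi x) _ _ _).
- by move=> T phi x y; rewrite devD scalerDr.
- by move=> T phi t x; rewrite devZ scalerAr.
- move=> T T' phi phi' g H x; rewrite (dev_nat _ H); symmetry; exact: (linearZ_LR g).
Defined.

Lemma dA1 a b c : dadd a (dadd b c) = dadd (dadd a b) c.
Proof. by apply: dual_ext => * /=; rewrite addrA. Qed.
Lemma dA2 a b : dadd a b = dadd b a.
Proof. by apply: dual_ext => * /=; rewrite addrC. Qed.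
Lemma dA3 a : dadd dzero a = a.
Proof. by apply: dual_ext => * /=; rewrite add0r. Qed.
Lemma dA4 a : dadd (dopp a) a = dzero.
Proof. by apply: dual_ext => * /=; rewrite addNr. Qed.
Lemma dS1 a b w : dscale a (dscale b w) = dscale (a * b) w.
Proof. by apply: dual_ext => * /=; rewrite scalerA. Qed.
Lemma dS2 w : dscale 1 w = w.
Proof. by apply: dual_ext => * /=; rewrite scale1r. Qed.
Lemma dS3 a u v : dscale a (dadd u v) = dadd (dscale a u) (dscale a v).
Proof. by apply: dual_ext => * /=; rewrite scalerDr. Qed.
Lemma dS4 w a b : dscale (a + b) w = dadd (dscale a w) (dscale b w).
Proof. by apply: dual_ext => * /=; rewrite scalerDl. Qed.

Section Small.
Variables (X : lmodType K) (f : dual_pt M S -> X) (finj : injective f).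
Definition Vt0 (H : injective f) := {x : X | exists w, f w = x}.
Local Notation Vt := (Vt0 finj).
HB.instance Definition _ := gen_eqMixin Vt.
HB.instance Definition _ := gen_choiceMixin Vt.
Definition Gv (v : Vt) : dual_pt M S := projT1 (cid (proj2_sig v)).
Definition Fv (w : dual_pt M S) : Vt := exist _ (f w) (ex_intro _ w erefl).
Lemma GF w : Gv (Fv w) = w.
Proof. apply: finj; exact: (projT2 (cid (proj2_sig (Fv w)))). Qed.
Lemma FG v : Fv (Gv v) = v.
Proof.
move: v => [x Hx]; rewrite /Fv.
have E : f (Gv (exist _ x Hx)) = x := projT2 (cid Hx).
move: (ex_intro _ _ _); rewrite E => H; congr exist; exact: Prop_irrelevance.
Qed.
Definition vadd (u v : Vt) := Fv (dadd (Gv u) (Gv v)).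
Definition vopp (u : Vt) := Fv (dopp (Gv u)).
Definition vzero := Fv dzero.
Definition vscale (k : K) (u : Vt) := Fv (dscale k (Gv u)).
Lemma vA1 : associative vadd.
Proof. by move=> a b c; rewrite /vadd !GF dA1. Qed.
Lemma vA2 : commutative vadd.
Proof. by move=> a b; rewrite /vadd dA2. Qed.
Lemma vA3 : left_id vzero vadd.
Proof. by move=> a; rewrite /vadd /vzero GF dA3 FG. Qed.
Lemma vA4 : left_inverse vzero vopp vadd.
Proof. by move=> a; rewrite /vadd /vopp GF dA4. Qed.
HB.instance Definition _ := GRing.isZmodule.Build Vt vA1 vA2 vA3 vA4.
Lemma vS1 a b (w : Vt) : vscale a (vscale b w) = vscale (a * b) w.
Proof. by rewrite /vscale GF dS1. Qed.
Lemma vS2 : left_id 1 vscale.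
Proof. by move=> w; rewrite /vscale dS2 FG. Qed.
Lemma vS3 : right_distributive vscale +%R.
Proof.
move=> a u v; change (vscale a (vadd u v) = vadd (vscale a u) (vscale a v)).
by rewrite /vscale /vadd !GF dS3. Qed.
Lemma vS4 (w : Vt) : {morph vscale^~ w : a b / a + b}.
Proof.
move=> a b; change (vscale (a + b) w = vadd (vscale a w) (vscale b w)).
by rewrite /vscale /vadd !GF dS4. Qed.
HB.instance Definition _ := GRing.Zmodule_isLmodule.Build K Vt vS1 vS2 vS3 vS4.
Lemma Gv_lin a (u v : Vt) : Gv (a *: u + v) = dadd (dscale a (Gv u)) (Gv v).
Proof.
change (Gv (vadd (vscale a u) v) = dadd (dscale a (Gv u)) (Gv v)).
by rewrite /vadd /vscale !GF. Qed.
End Small.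
End DualVS.

Lemma sep_embeds : dual_well_defined M -> separated M ->
  exists V : lmodType K, embeds_in_vdual M V.
Proof.
move=> HM sep; have [X [f finj]] := HM (Kalg K).
exists (Vt0 finj).
exists (fun (S : comAlgType K) (m : kobj M S) (v : Vt0 finj) => dev (Gv v) (in_alg S : {lrmorphism Kalg K -> S}) m).
split.
- by move=> S m a v u; rewrite Gv_lin.
- by move=> S s m m' v; rewrite devD devZ.
- by move=> S T g m v; apply: dev_nat => k; apply: in_alg_comm.
- move=> S m1 m2 E; apply: (sep_mono sep); apply: funext => w.
  by have := congr1 (fun g => g (Fv finj w)) E; rewrite /= GF.
Qed.

Lemma embeds_sep : (exists V : lmodType K, embeds_in_vdual M V) -> separated M.
Proof.
move=> [V [h [hlin hS hnat hinj]]] S m m0.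
have h0 : forall (T : comAlgType K) v, h T 0 v = 0.
  move=> T v; have := hS T 1 0 0 v; rewrite scaler0 addr0 mul1r => H.
  by apply: (addIr (h T 0 v)); rewrite add0r -H.
have hD : forall (T : comAlgType K) x y v, h T (x + y) v = h T x v + h T y v.
  by move=> T x y v; have := hS T 1 x y v; rewrite scale1r mul1r.
have hZ : forall (T : comAlgType K) t x v, h T (t *: x) v = t * h T x v.
  by move=> T t x v; have := hS T t x 0 v; rewrite addr0 h0 addr0.
have [v Hv] : exists v, h S m v != 0.
  apply: contra_notP (negP m0) => nv; apply/eqP; apply: (hinj S).
  apply: funext => v; rewrite h0; apply/eqP; apply: contra_notT nv => Hv.
  by exists v.
pose d := fun (T : comAlgType K) (psi : {lrmorphism S -> T}) (x : kobj M T) => h T x v.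
have dD : forall T psi x y, @d T psi (x + y) = d T psi x + d T psi y.
  by move=> *; apply: hD.
have dZ : forall T psi t x, @d T psi (t *: x) = t * d T psi x.
  by move=> *; apply: hZ.
have dN : forall (T T' : comAlgType K) (phi : {lrmorphism S -> T})
    (phi' : {lrmorphism S -> T'}) (g : {lrmorphism T -> T'}),
    (forall s, g (phi s) = phi' s) -> forall x, d T' phi' (kmap g x) = g (d T phi x).
  by move=> T T' phi phi' g _ x; apply: hnat.
exists S, idfun, (DualPt dD dZ dN).
by rewrite /= /d kmap_id.
Qed.

End Main.

Theorem proposition4p4 (K : fieldType) (M : kmod K)
    (HM : dual_well_defined M) :
  (separated M <-> to_sch_mono M) /\
  (separated M <-> exists V : lmodType K, embeds_in_vdual M V).
Proof.
split; split.
- exact: sep_mono.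
- exact: mono_sep.
- exact: sep_embeds HM.
- exact: embeds_sep.
Qed.
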